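(* Let $N\geq 2$, $k\geq 1$ be integers, $s\in\left(-\frac{1}{N-1},1\right)$, and let $\Gamma(N,k)$ be the $N^k\times N^k$ matrix with rows and columns indexed by functions $\sigma,\tau:\{1,\dots,k\}\to\{1,\dots,N\}$ and entries $\Gamma(N,k)_{\sigma\tau}=s^{|\{t:\sigma(t)\neq\tau(t)\}|}$ (the Gram matrix of the states $|\psi_{\sigma(1)}\rangle\otimes\cdots\otimes|\psi_{\sigma(k)}\rangle$ where $|\psi_1\rangle,\dots,|\psi_N\rangle$ are unit vectors with pairwise inner products $s$). Then there exists an $N^k\times N^k$ positive semidefinite matrix $Z(N,k)$, all of whose diagonal entries equal $1/N^k$, such that $$\operatorname{tr}\left[\Gamma(N,k)Z(N,k)\right]=\begin{cases}(1-s)^k, & s\in[0,1),\\ \left[1+(N-1)s\right]^k, & s\in\left(-\frac{1}{N-1},0\right].\end{cases}$$ *)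

(* Defs.v *)
From HB Require Import structures.
From mathcomp Require Import all_boot all_order all_algebra.
From mathcomp Require Import reals.
Set Implicit Arguments. Unset Strict Implicit. Unset Printing Implicit Defensive.
Import Order.TTheory GRing.Theory Num.Theory.
Local Open Scope ring_scope.

Definition idx (N k : nat) := {ffun 'I_k -> 'I_N}.

(* Matrices indexed by idx N k, via the canonical enumeration of the finType. *)
Notation dimG N k := #|{: idx N k}|.

Definition Gamma (R : ringType) (N k : nat) (s : R) : 'M[R]_(dimG N k) :=
  \matrix_(i, j) s ^+ #|[set t | (enum_val i : idx N k) t != (enum_val j : idx N k) t]|.

Definition psd (R : numDomainType) (n : nat) (Z : 'M[R]_n) : Prop :=
  Z^T = Z /\ forall x : 'cV[R]_n, 0 <= (x^T *m Z *m x) ord0 ord0.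

(* Main.v *)
Require Import Defs.
From HB Require Import structures.
From mathcomp Require Import all_boot all_order all_algebra.
From mathcomp Require Import reals.
From mathcomp Require Import ring.
Import Order.TTheory GRing.Theory Num.Theory.
Local Open Scope ring_scope.

Lemma qf (R : realType) n (A : 'M[R]_n) (x : 'cV[R]_n) :
  (x^T *m A *m x) ord0 ord0 = \sum_i \sum_j x i ord0 * A i j * x j ord0.
Proof.
rewrite mxE; under eq_bigr => j _ do rewrite mxE big_distrl /=.
rewrite exchange_big; apply: eq_bigr => i _; apply: eq_bigr => j _.
by rewrite mxE.
Qed.

Section Key.
Variables (R : realType) (N k : nat) (s : R) (u : 'I_N -> 'I_N -> R).
Let g (a b : 'I_N) : R := \sum_p u p a * u p b.

Lemma gC a b : g a b = g b a.
Proof. by apply: eq_bigr => p _; rewrite mulrC. Qed.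

Lemma pow_card (sg tu : idx N k) :
  s ^+ #|[set t | sg t != tu t]| = \prod_t (if sg t != tu t then s else 1).
Proof.
rewrite -big_mkcond /= -prodr_const; apply: eq_bigl => t; by rewrite inE.
Qed.

Lemma sum_idx (F : idx N k -> R) :
  \sum_(i < dimG N k) F (enum_val i) = \sum_(x : idx N k) F x.
Proof. by symmetry; apply: reindex; exists enum_rank => x _; [apply: enum_valK|apply: enum_rankK]. Qed.

Lemma key (d e : R) : (0 < N)%N -> 0 < d -> (forall a, g a a = d) ->
  (forall a, \sum_b (if a != b then s else 1) * g b a = e) ->
  exists Z : 'M[R]_(dimG N k),
    psd Z /\ (forall i, Z i i = ((N ^ k)%:R)^-1) /\
    \tr (Gamma N k s *m Z) = (e / d) ^+ k.
Proof.
move=> N0 d0 gd ge.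
set K := ((N ^ k)%:R * d ^+ k)^-1.
have K0 : 0 <= K by rewrite invr_ge0 mulr_ge0 // ?ler0n // exprn_ge0 // ltW.
exists (\matrix_(i, j) (K * \prod_t g ((enum_val i : idx N k) t) ((enum_val j : idx N k) t))).
split; [split|split].
- apply/matrixP => i j; rewrite !mxE; congr (_ * _).
  by apply: eq_bigr => t _; rewrite gC.
- move=> x.
  pose v (sg : idx N k) (f : {ffun 'I_k -> 'I_N}) := \prod_t u (f t) (sg t).
  have gv : forall sg tu : idx N k, \prod_t g (sg t) (tu t) = \sum_f v sg f * v tu f.
    move=> sg tu; rewrite /g bigA_distr_bigA /=.
    by apply: eq_bigr => f _; rewrite -big_split.
  suff -> : (x^T *m (\matrix_(i, j) (K * \prod_t g ((enum_val i : idx N k) t) ((enum_val j : idx N k) t))) *m x) ord0 ord0 = K * \sum_f (\sum_i x i ord0 * v (enum_val i) f) * (\sum_j x j ord0 * v (enum_val j) f).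
    by apply: mulr_ge0 => //; apply: sumr_ge0 => f _; rewrite -expr2 sqr_ge0.
    rewrite qf.
    rewrite mulr_sumr.
    under [RHS]eq_bigr => f _ do rewrite big_distrl big_distrr /=.
    rewrite [RHS]exchange_big /=; apply: eq_bigr => i _.
    under [RHS]eq_bigr => f _ do rewrite big_distrr /=.
    under [RHS]eq_bigr => f _ do rewrite mulr_sumr.
    rewrite [RHS]exchange_big /=; apply: eq_bigr => j _.
    rewrite !mxE gv mulr_sumr big_distrr big_distrl /=; apply: eq_bigr => f _.
    by ring.
- move=> i; rewrite mxE.
  under eq_bigr do rewrite gd.
  rewrite prodr_const card_ord /K invfM -mulrA mulVf ?mulr1 //.
  by rewrite expf_neq0 // gt_eqF.
have E1 : forall sg : idx N k,
  \sum_(tu : idx N k) (\prod_t (if sg t != tu t then s else 1)) *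
     (K * \prod_t g (tu t) (sg t)) = K * e ^+ k.
  move=> sg; under eq_bigr do rewrite mulrCA -big_split /=.
  rewrite -mulr_sumr; congr (K * _).
  rewrite /idx -(bigA_distr_bigA (fun t b => (if sg t != b then s else 1) * g b (sg t))) /=.
  under eq_bigr do rewrite ge.
  by rewrite prodr_const card_ord.
rewrite /mxtrace; transitivity (\sum_(i < dimG N k) (K * e^+k)).
  apply: eq_bigr => i _; rewrite mxE -(E1 (enum_val i)) -sum_idx.
  by apply: eq_bigr => j _; rewrite !mxE pow_card.
rewrite sumr_const card_ord card_ffun !card_ord /K expr_div_n.
have -> : forall x : R, x *+ (N^k) = x * (N^k)%:R by move=> x; rewrite mulr_natr.
have : (N ^ k)%:R != 0 :> R by rewrite pnatr_eq0 -lt0n expn_gt0 N0.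
have : d ^+ k != 0 by rewrite expf_neq0 // gt_eqF.
move: ((N ^ k)%:R) (d ^+ k) (e ^+ k) => M D E HD HM.
by rewrite invfM -!mulrA mulrC -!mulrA mulfV // mulr1 mulrC.
Qed.
End Key.

Lemma sum_delta (R : realType) n (a : 'I_n) (F : 'I_n -> R) :
  \sum_p (a == p)%:R * F p = F a.
Proof.
rewrite (bigD1 a) //= eqxx mul1r big1 ?addr0 // => p hp.
by rewrite eq_sym (negbTE hp) mul0r.
Qed.

Theorem theorem4 (R : realType) (N k : nat) (s : R) :
  (2 <= N)%N -> (1 <= k)%N ->
  - (N.-1%:R)^-1 < s -> s < 1 ->
  exists Z : 'M[R]_(dimG N k),
    psd Z /\
    (forall i, Z i i = ((N ^ k)%:R)^-1) /\
    \tr (Gamma N k s *m Z) =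
      (if 0 <= s then (1 - s) ^+ k else (1 + N.-1%:R * s) ^+ k).
Proof.
case: N => [|[|M]] // _ _ _ _.
have Npos : (0 < M.+2)%N by [].
case: ifP => _.
- pose u (p a : 'I_M.+2) : R := (a == p)%:R * M.+2%:R - 1.
  have gE : forall a b : 'I_M.+2, \sum_p u p a * u p b = (b == a)%:R * M.+2%:R ^+ 2 - M.+2%:R.
    move=> a b.
    transitivity (\sum_p ((a == p)%:R * ((b == p)%:R * M.+2%:R ^+ 2 - M.+2%:R) - ((b == p)%:R * M.+2%:R - 1)) : R).
      by apply: eq_bigr => p _; rewrite /u; ring.
    rewrite sumrB sum_delta sumrB (sum_delta R _ b (fun _ => M.+2%:R)) sumr_const card_ord.
    by rewrite subrr subr0.
  have d0 : 0 < M.+2%:R ^+ 2 - M.+2%:R :> R.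
    by rewrite subr_gt0 -natrX ltr_nat expnS ltn_Pmull.
  have := @key R M.+2 k s u (M.+2%:R ^+ 2 - M.+2%:R) ((M.+2%:R ^+ 2 - M.+2%:R) * (1 - s)) Npos d0.
  rewrite mulrAC divff ?gt_eqF // mul1r; apply.
    by move=> a; rewrite gE eqxx mul1r.
  move=> a; rewrite (bigD1 a) //= eqxx /= mul1r gE eqxx mul1r.
  rewrite (eq_bigr (fun _ => s * - M.+2%:R)); last first.
    move=> b hb; have hb' : (a == b) = false by rewrite eq_sym (negbTE hb).
    by rewrite hb' /= gE hb' mul0r sub0r.
  rewrite sumr_const cardC1 card_ord /=.
  ring.
- pose u (p a : 'I_M.+2) : R := 1.
  have gE : forall a b : 'I_M.+2, \sum_p u p a * u p b = M.+2%:R.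
    by move=> a b; rewrite /u (eq_bigr (fun _ => 1)) ?sumr_const ?card_ord // => p _; rewrite mulr1.
  have gE1 : \sum_(p : 'I_M.+2) (1:R) * 1 = M.+2%:R by apply: gE ord0 ord0.
  have d0 : 0 < M.+2%:R :> R by rewrite ltr0n.
  have := @key R M.+2 k s u (M.+2%:R) (M.+2%:R * (1 + M.+1%:R * s)) Npos d0.
  rewrite mulrAC divff ?gt_eqF // mul1r; apply.
    by move=> a; rewrite gE.
  move=> a; rewrite (bigD1 a) //= eqxx /= mul1r ?gE ?gE1.
  rewrite (eq_bigr (fun _ => s * M.+2%:R)); last first.
    move=> b hb; have hb' : (a == b) = false by rewrite eq_sym (negbTE hb).
    by rewrite hb' /= ?gE ?gE1.
  rewrite sumr_const cardC1 card_ord /=.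
  ring.
Qed.
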